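(* For every integer $n>1$, \[ \mathrm{DE3}(n+2)+\mathrm{DE3}(n-1) = \mathrm{DE1}(n)+\mathrm{DE1}(n-1). \]
   Context: For a nonnegative integer $n$, $\mathrm{DE1}(n)$ denotes the number of partitions of $n$ in which no even part is repeated and the largest part is odd, and $\mathrm{DE3}(n)$ denotes the number of partitions of $n$ in which no even part is repeated and the largest part is odd and appears exactly once. In both cases the empty partition is not counted, so $\mathrm{DE1}(0)=\mathrm{DE3}(0)=0$. *)

(* Defs.v *)
From mathcomp Require Import all_boot.
Set Implicit Arguments. Unset Strict Implicit. Unset Printing Implicit Defensive.

(* A partition of n is encoded by its multiplicity function:
   m : {ffun 'I_n.+1 -> 'I_n.+1}, where m i is the number of parts equal to i
   (the entry at index 0 is required to be 0), and \sum_i i * m i = n. *)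
Definition mult_part (n : nat) := {ffun 'I_n.+1 -> 'I_n.+1}.

Definition is_partition (n : nat) (m : mult_part n) : bool :=
  (m ord0 == 0 :> nat) && (\sum_(i < n.+1) i * m i == n).

Definition no_even_repeated (n : nat) (m : mult_part n) : bool :=
  [forall i : 'I_n.+1, ~~ odd i ==> (m i <= 1)].

Definition largest_part_is (n : nat) (m : mult_part n) (i : 'I_n.+1) : bool :=
  (0 < m i) && [forall j : 'I_n.+1, (i < j) ==> (m j == 0 :> nat)].

Definition largest_odd (n : nat) (m : mult_part n) : bool :=
  [exists i : 'I_n.+1, largest_part_is m i && odd i].

Definition largest_odd_once (n : nat) (m : mult_part n) : bool :=
  [exists i : 'I_n.+1, [&& largest_part_is m i, odd i & (m i == 1 :> nat)]].

Definition DE1 (n : nat) : nat :=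
  #|[set m : mult_part n | [&& is_partition m, no_even_repeated m & largest_odd m]]|.

Definition DE3 (n : nat) : nat :=
  #|[set m : mult_part n | [&& is_partition m, no_even_repeated m & largest_odd_once m]]|.

(* Main.v *)
Require Import Defs.
From mathcomp Require Import all_boot zify.
From Stdlib Require Import FunctionalExtensionality.
Set Implicit Arguments. Unset Strict Implicit. Unset Printing Implicit Defensive.

Definition supp_le N (f : nat -> nat) := forall i, N < i -> f i = 0.
Definition bnd N (f : nat -> nat) := forall i, f i <= N.

Definition conv N (m : mult_part N) : nat -> nat :=
  fun i => if i < N.+1 then (m (inord i) : nat) else 0.
Definition mk N (f : nat -> nat) : mult_part N := [ffun j : 'I_N.+1 => inord (f j)].

Lemma conv_ord N (m : mult_part N) (i : 'I_N.+1) : conv m i = m i.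
Proof. by rewrite /conv ltn_ord inord_val. Qed.

Lemma conv_supp N (m : mult_part N) : supp_le N (conv m).
Proof. by move=> i Ni; rewrite /conv ltnS leqNgt Ni. Qed.

Lemma conv_bnd N (m : mult_part N) : bnd N (conv m).
Proof. by move=> i; rewrite /conv; case: ifP => // _; rewrite -ltnS ltn_ord. Qed.

Lemma conv_mk M g : supp_le M g -> bnd M g -> conv (mk M g) = g.
Proof.
move=> s b; apply: functional_extensionality => i; rewrite /conv.
case: ifP => iM; last by rewrite s // ltnNge -ltnS iM.
by rewrite ffunE /= !inordK // ltnS b.
Qed.

Lemma mk_conv N (m : mult_part N) : mk N (conv m) = m.
Proof. by apply/ffunP => j; rewrite ffunE; apply: val_inj; rewrite /= conv_ord inordK. Qed.

Lemma card_bij (T U : finType) (A : {set T}) (B : {set U}) (f : T -> U) (g : U -> T) :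
  {in A, forall x, f x \in B} -> {in B, forall y, g y \in A} ->
  {in A, cancel f g} -> {in B, cancel g f} -> #|A| = #|B|.
Proof.
move=> fAB gBA fK gK; apply/eqP; rewrite eqn_leq; apply/andP; split.
- rewrite -(@card_in_imset _ _ f A); last first.
    by move=> x y xA yA e; rewrite -(fK x xA) e fK.
  by apply: subset_leq_card; apply/subsetP => _ /imsetP[x xA ->]; apply: fAB.
- rewrite -(@card_in_imset _ _ g B); last first.
    by move=> x y xA yA e; rewrite -(gK x xA) e gK.
  by apply: subset_leq_card; apply/subsetP => _ /imsetP[x xA ->]; apply: gBA.
Qed.

Lemma transport N M (PA PB : (nat -> nat) -> bool) (F G : (nat -> nat) -> (nat -> nat)) :
  (forall f, supp_le N f -> bnd N f -> PA f ->
     [/\ supp_le M (F f), bnd M (F f), PB (F f) & G (F f) = f]) ->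
  (forall g, supp_le M g -> bnd M g -> PB g ->
     [/\ supp_le N (G g), bnd N (G g), PA (G g) & F (G g) = g]) ->
  #|[set m : mult_part N | PA (conv m)]| = #|[set m : mult_part M | PB (conv m)]|.
Proof.
move=> hF hG.
apply: (@card_bij _ _ _ _ (fun m => mk M (F (conv m))) (fun m => mk N (G (conv m)))).
- move=> m; rewrite !inE => Pm.
  by have [s b p _] := hF _ (conv_supp m) (conv_bnd m) Pm; rewrite conv_mk.
- move=> m; rewrite !inE => Pm.
  by have [s b p _] := hG _ (conv_supp m) (conv_bnd m) Pm; rewrite conv_mk.
- move=> m; rewrite !inE => Pm.
  by have [s b p e] := hF _ (conv_supp m) (conv_bnd m) Pm; rewrite conv_mk // e mk_conv.
- move=> m; rewrite !inE => Pm.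
  by have [s b p e] := hG _ (conv_supp m) (conv_bnd m) Pm; rewrite conv_mk // e mk_conv.
Qed.

Lemma split_card (T : finType) (P Q : pred T) :
  #|[set x | P x && Q x]| + #|[set x | P x && ~~ Q x]| = #|[set x | P x]|.
Proof.
rewrite -(cardsID [set x | Q x] [set x | P x]); congr (_ + _).
  apply: eq_card => x. by rewrite !inE.
apply: eq_card => x. by rewrite !inE andbC.
Qed.

Lemma sum_widen K K1 f : supp_le K f -> K <= K1 ->
  \sum_(i < K1.+1) i * f i = \sum_(i < K.+1) i * f i.
Proof.
move=> s KK1.
rewrite -(big_mkord xpredT (fun i => i * f i)) -(big_mkord xpredT (fun i => i * f i)).
rewrite (big_cat_nat _ (n := K.+1)) //= -[RHS]addn0; congr (_ + _).
rewrite big_nat_cond big1 // => i /andP[/andP[Ki _] _].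
by rewrite s ?muln0.
Qed.

Lemma sum_delta R b : b <= R -> \sum_(i < R.+1) i * ((i : nat) == b) = b.
Proof.
move=> bR; have bR' : b < R.+1 by [].
rewrite (bigD1 (Ordinal bR')) //= eqxx muln1 big1 ?addn0 // => i ne.
have -> : ((i : nat) == b) = false.
  by apply/negbTE; apply: contra ne => /eqP e; apply/eqP/val_inj.
by rewrite muln0.
Qed.

Lemma sum_add R g b : b <= R ->
  \sum_(i < R.+1) i * (g i + ((i : nat) == b)) = \sum_(i < R.+1) i * g i + b.
Proof.
move=> bR.
rewrite (eq_bigr (fun i : 'I_R.+1 => i * g i + i * ((i:nat) == b))); last first.
  by move=> i _; rewrite mulnDr.
by rewrite big_split /= sum_delta.
Qed.

Lemma sum_sub R f a : a <= R -> 0 < f a ->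
  \sum_(i < R.+1) i * (f i - ((i : nat) == a)) + a = \sum_(i < R.+1) i * f i.
Proof.
move=> aR fa; have aR' : a < R.+1 by [].
rewrite (bigD1 (Ordinal aR')) //= (bigD1 (Ordinal aR') (F := fun i : 'I_R.+1 => i * f i)) //=.
rewrite eqxx.
have -> : \sum_(i < R.+1 | i != Ordinal aR') i * (f i - ((i : nat) == a)) =
          \sum_(i < R.+1 | i != Ordinal aR') i * f i.
  apply: eq_bigr => i ne.
  have -> : ((i : nat) == a) = false.
    by apply/negbTE; apply: contra ne => /eqP e; apply/eqP/val_inj.
  by rewrite subn0.
rewrite (_ : a * (f a - true) = a * f a - a); last by rewrite mulnBr muln1.
have : a <= a * f a by rewrite leq_pmulr.
move=> h; rewrite addnAC subnK //.
Qed.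

Definition move a b (f : nat -> nat) := fun i => f i - (i == a) + (i == b).

Lemma move_sum R f a b : a <= R -> b <= R -> 0 < f a ->
  \sum_(i < R.+1) i * move a b f i + a = \sum_(i < R.+1) i * f i + b.
Proof.
move=> aR bR fa; rewrite /move sum_add // -(sum_sub aR fa); lia.
Qed.

Lemma move_inv f a b : 0 < f a -> a != b -> move b a (move a b f) = f.
Proof.
move=> fa ab; apply: functional_extensionality => i; rewrite /move.
case: (eqVneq i a) => [->{i}|ia].
  rewrite (negbTE ab) /=; lia.
case: (eqVneq i b) => [->|ib] /=; lia.
Qed.

Definition lp N (f : nat -> nat) := \max_(i < N.+1 | 0 < f i) (i : nat).
Definition part N (f : nat -> nat) := (f 0 == 0) && (\sum_(i < N.+1) i * f i == N).
Definition ner N (f : nat -> nat) := [forall i : 'I_N.+1, ~~ odd i ==> (f i <= 1)].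
Definition base N f := part N f && ner N f.

Lemma lp_le N f : lp N f <= N.
Proof. by apply/bigmax_leqP => i _; rewrite -ltnS ltn_ord. Qed.

Lemma lp_eq N f L : supp_le N f -> 0 < f L -> (forall j, L < j -> f j = 0) -> lp N f = L.
Proof.
move=> s fL hL.
have LN : L < N.+1 by rewrite ltnS leqNgt; apply/negP => /s e; rewrite e in fL.
apply/eqP; rewrite eqn_leq; apply/andP; split.
- apply/bigmax_leqP => i fi; rewrite leqNgt; apply/negP => Li.
  by rewrite (hL _ Li) in fi.
- exact: (@leq_bigmax_cond _ (fun i : 'I_N.+1 => 0 < f i) (fun i : 'I_N.+1 => (i : nat)) (Ordinal LN) fL).
Qed.

Lemma lp_spec N f i0 : supp_le N f -> 0 < f i0 ->
  0 < f (lp N f) /\ forall j, lp N f < j -> f j = 0.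
Proof.
move=> s fi0.
have i0N : i0 < N.+1 by rewrite ltnS leqNgt; apply/negP => /s e; rewrite e in fi0.
have hj : forall j, lp N f < j -> f j = 0.
  move=> j Lj; case: (leqP j N) => jN; last by rewrite s.
  have jN' : j < N.+1 by [].
  case: (posnP (f j)) => // fj.
  have := (@leq_bigmax_cond _ (fun i : 'I_N.+1 => 0 < f i) (fun i : 'I_N.+1 => (i : nat)) (Ordinal jN') fj).
  rewrite -/(lp N f) /=; lia.
split=> //.
have : 0 < #|(fun i : 'I_N.+1 => 0 < f i)|.
  by apply/card_gt0P; exists (Ordinal i0N).
move=> /(eq_bigmax_cond (fun i : 'I_N.+1 => (i : nat))) [k kin e].
rewrite /lp.
have -> : \max_(i < N.+1 | 0 < f i) (i : nat) = k by rewrite -e.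
exact: kin.
Qed.

Lemma part_ne N f : \sum_(i < N.+1) i * f i = N -> 0 < N -> exists i, 0 < f i.
Proof.
move=> e N0; case: (boolP [exists i : 'I_N.+1, 0 < f i]).
  by move=> /existsP[i fi]; exists i.
move=> /existsPn h; move: e; rewrite big1 => [e|i _]; first by rewrite -e in N0.
by have := h i; rewrite lt0n negbK => /eqP ->; rewrite muln0.
Qed.

Lemma base_iff N f : supp_le N f -> base N f <->
  [/\ f 0 = 0, \sum_(i < N.+1) i * f i = N & forall i, ~~ odd i -> f i <= 1].
Proof.
move=> s; split.
- case/andP => /andP[/eqP f0 /eqP sm] /forallP nr; split=> // i oi.
  case: (leqP i N) => iN; last by rewrite s.
  have iN' : i < N.+1 by [].
  by have := nr (Ordinal iN'); rewrite /= oi.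
- case=> f0 sm nr; apply/andP; split; first by rewrite /part f0 sm !eqxx.
  by apply/forallP => i; apply/implyP; apply: nr.
Qed.

Lemma mk_base N R h : supp_le R h -> h 0 = 0 -> \sum_(i < R.+1) i * h i = N ->
  (forall i, ~~ odd i -> h i <= 1) -> [/\ supp_le N h, bnd N h & base N h].
Proof.
move=> s h0 sm nr.
have single : forall i, i <= R -> i * h i <= N.
  move=> i iR; have iR' : i < R.+1 by [].
  by rewrite -sm (bigD1 (Ordinal iR')) //= leq_addr.
have sN : supp_le N h.
  move=> i Ni; case: (leqP i R) => iR; last by rewrite s.
  have := single i iR; case: (posnP (h i)) => // hi; nia.
have bN : bnd N h.
  move=> i; case: (leqP i R) => iR; last by rewrite s.
  case: i iR => [|i] iR; first by rewrite h0.
  have := single _ iR; nia.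
split=> //; apply/base_iff => //; split=> //.
case: (leqP N R) => NR.
  by rewrite -(sum_widen sN NR).
by rewrite (sum_widen s (ltnW NR)).
Qed.

Definition D1 N f := base N f && odd (lp N f).
Definition D3 N f := base N f && (odd (lp N f) && (f (lp N f) == 1)).

Lemma is_partitionE N (m : mult_part N) : is_partition m = part N (conv m).
Proof.
rewrite /is_partition /part -(conv_ord m ord0) /=; congr (_ && (_ == _)).
by apply: eq_bigr => i _; rewrite conv_ord.
Qed.

Lemma nerE N (m : mult_part N) : no_even_repeated m = ner N (conv m).
Proof. by apply: eq_forallb => i; rewrite conv_ord. Qed.

Lemma lpart_ex N (m : mult_part N) (P : nat -> bool) : 0 < N -> base N (conv m) ->
  [exists i, largest_part_is m i && P i] = P (lp N (conv m)).
Proof.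
move=> N0 /(base_iff (conv_supp m)) [f0 sm nr].
have [i0 fi0] := part_ne sm N0.
have [fL hL] := lp_spec (conv_supp m) fi0.
have LN : lp N (conv m) < N.+1 by rewrite ltnS lp_le.
apply/existsP/idP.
- case=> i /andP[/andP[mi /forallP hj] Pi].
  suff -> : lp N (conv m) = i by [].
  apply: lp_eq; first exact: conv_supp.
    by rewrite conv_ord.
  move=> j ij; case: (leqP j N) => jN; last by rewrite conv_supp.
  have jN' : j < N.+1 by [].
  rewrite -[j]/(nat_of_ord (Ordinal jN')) conv_ord.
  by have := hj (Ordinal jN'); rewrite /= ij => /eqP.
- move=> PL; exists (inord (lp N (conv m))).
  rewrite /largest_part_is -conv_ord inordK // fL PL /= andbT.
  apply/forallP => j; apply/implyP => Lj; rewrite -conv_ord hL //.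
Qed.

Lemma DE1E N : 0 < N -> DE1 N = #|[set m : mult_part N | D1 N (conv m)]|.
Proof.
move=> N0; rewrite /DE1; apply: eq_card => m; rewrite !inE.
rewrite is_partitionE nerE /D1 /base andbA.
case Hb: (part N (conv m) && ner N (conv m)) => //=.
have -> : largest_odd m = [exists i, largest_part_is m i && odd i] by [].
by rewrite lpart_ex.
Qed.

Lemma DE3E N : 0 < N -> DE3 N = #|[set m : mult_part N | D3 N (conv m)]|.
Proof.
move=> N0; rewrite /DE3; apply: eq_card => m; rewrite !inE.
rewrite is_partitionE nerE /D3 /base andbA.
case Hb: (part N (conv m) && ner N (conv m)) => //=.
rewrite -(@lpart_ex N m (fun k => odd k && (conv m k == 1))) //.
by apply: eq_existsb => i; rewrite conv_ord.
Qed.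

Lemma odd_pred n : 0 < n -> odd n.-1 = ~~ odd n.
Proof. by case: n => //= n _; rewrite negbK. Qed.

Lemma neq_odd i j : odd i != odd j -> i != j.
Proof. by apply: contraNneq => ->. Qed.

Lemma move_a a b f : a != b -> move a b f a = f a - 1.
Proof. by move=> ab; rewrite /move eqxx (negbTE ab) addn0. Qed.

Lemma move_b a b f : a != b -> move a b f b = f b + 1.
Proof. by move=> ab; rewrite /move eqxx eq_sym (negbTE ab) subn0. Qed.

Lemma move_o a b f i : i != a -> i != b -> move a b f i = f i.
Proof. by move=> ia ib; rewrite /move (negbTE ia) (negbTE ib) subn0 addn0. Qed.

Lemma move_le a b f i : i != b -> move a b f i <= f i.
Proof. by move=> ib; rewrite /move (negbTE ib) addn0 leq_subr. Qed.

Lemma move_supp R f a b : supp_le R f -> b <= R -> supp_le R (move a b f).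
Proof.
move=> s bR i Ri; rewrite /move s //.
have -> : (i == b) = false by apply/eqP; lia.
by rewrite sub0n.
Qed.

Ltac neqlia := apply/eqP; lia.
Ltac solve_side := first [ done | lia | (apply/eqP; lia) ].

Definition Fa N f := move (lp N f) (lp N f).-1 f.
Definition Ga N g := move (lp N g) (lp N g).+1 g.

Lemma card_a N : 0 < N ->
  #|[set m : mult_part N.+1 | base N.+1 (conv m) && ~~ odd (lp N.+1 (conv m))]|
  = #|[set m : mult_part N | D1 N (conv m)]|.
Proof.
move=> N0; apply: (@transport N.+1 N (fun f => base N.+1 f && ~~ odd (lp N.+1 f)) (D1 N) (Fa N.+1) (Ga N)).
- move=> f s _ /andP[bs ev].
  have [f0 sm nr] := (base_iff s).1 bs.
  have [i0 fi0] := part_ne sm (ltn0Sn N).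
  have [fL hL] := lp_spec s fi0.
  have LN := lp_le N.+1 f.
  rewrite /Fa; set L := lp N.+1 f in fL hL ev LN *.
  have L0 : 0 < L by case: (posnP L) => // e; rewrite e f0 in fL.
  have L1 : L != 1 by apply: contraNneq ev => ->.
  have fL1 : f L = 1 by have := nr L ev; lia.
  have oL : odd L.-1 by rewrite odd_pred.
  set h := move L L.-1 f.
  have hs : supp_le N.+1 h by apply: move_supp => //; lia.
  have h0 : h 0 = 0 by rewrite /h move_o ?f0 //; neqlia.
  have hsum : \sum_(i < N.+2) i * h i = N.
    have := @move_sum N.+1 f L L.-1 LN (leq_trans (leq_pred L) LN) fL.
    rewrite sm -/h; lia.
  have hnr : forall i, ~~ odd i -> h i <= 1.
    move=> i oi; apply: leq_trans (nr i oi); apply: move_le.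
    by apply: neq_odd; rewrite oL (negbTE oi).
  have [sN bN bh] := mk_base hs h0 hsum hnr.
  have lph : lp N h = L.-1.
    apply: lp_eq => //; first by rewrite /h move_b; solve_side.
    move=> j Lj; case: (eqVneq j L) => [->|jL].
      by rewrite /h move_a; solve_side.
    rewrite /h move_o // ?hL //; solve_side.
  split=> //; first by rewrite /D1 bh lph.
  by rewrite /Ga lph prednK // move_inv //; neqlia.
- move=> g s _ /andP[bs od].
  have [g0 sm nr] := (base_iff s).1 bs.
  have [i0 fi0] := part_ne sm N0.
  have [gL hL] := lp_spec s fi0.
  have LN := lp_le N g.
  rewrite /Ga; set L := lp N g in gL hL od LN *.
  have L0 : 0 < L by case: (posnP L) => // e; rewrite e g0 in gL.
  set h := move L L.+1 g.
  have s1 : supp_le N.+1 g by move=> i Ni; apply: s; lia.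
  have hs : supp_le N.+1 h by apply: move_supp.
  have h0 : h 0 = 0 by rewrite /h move_o ?g0 //; neqlia.
  have hsum : \sum_(i < N.+2) i * h i = N.+1.
    have := @move_sum N.+1 g L L.+1 (leqW LN) LN gL.
    rewrite (sum_widen s (leqnSn N)) sm => H; apply/eqP; rewrite -(eqn_add2r L) H addnS -addSn //.
  have hnr : forall i, ~~ odd i -> h i <= 1.
    move=> i oi; case: (eqVneq i L.+1) => [->|iL].
      by rewrite /h move_b ?hL //; neqlia.
    apply: leq_trans (nr i oi); apply: move_le => //.
  have [sN bN bh] := mk_base hs h0 hsum hnr.
  have lph : lp N.+1 h = L.+1.
    apply: lp_eq => //; first by rewrite /h move_b; solve_side.
    move=> j Lj; rewrite /h move_o // ?hL //; solve_side.
  split=> //; first by rewrite bh lph /= od.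
  by rewrite /Fa lph /= move_inv //; neqlia.
Qed.

Definition Xp N f := base N f && (odd (lp N f) || (0 < f (lp N f).-1)).
Definition Fb N f := move (lp N f) (lp N f).-2 f.
Definition kof N g := if odd (lp N g) then lp N g else (lp N g).-1.
Definition Gb N g := move (kof N g) (kof N g).+2 g.

Lemma card_b N : 0 < N ->
  #|[set m : mult_part N.+2 | D3 N.+2 (conv m)]|
  = #|[set m : mult_part N | Xp N (conv m)]|.
Proof.
move=> N0; apply: (@transport N.+2 N (D3 N.+2) (Xp N) (Fb N.+2) (Gb N)).
- move=> f s _ /andP[bs /andP[od /eqP fL1]].
  have [f0 sm nr] := (base_iff s).1 bs.
  have [i0 fi0] := part_ne sm (ltn0Sn N.+1).
  have [fL hL] := lp_spec s fi0.
  have LN := lp_le N.+2 f.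
  rewrite /Fb; set L := lp N.+2 f in fL hL od LN fL1 *.
  have L0 : 0 < L by case: (posnP L) => // e; rewrite e f0 in fL.
  have L1 : L != 1.
    apply/eqP => e; rewrite e in hL fL1.
    have s1 : supp_le 1 f by move=> j j1; apply: hL.
    move: sm; rewrite (sum_widen s1 (isT : 1 <= N.+2)).
    by rewrite !big_ord_recr big_ord0 /= f0 fL1.
  have eL : L = (L.-2).+2 by lia.
  have oL2 : odd L.-2 by move: od; rewrite {1}eL /= negbK.
  set h := move L L.-2 f.
  have hs : supp_le N.+2 h by apply: move_supp => //; lia.
  have h0 : h 0 = 0 by rewrite /h move_o ?f0 //; neqlia.
  have hsum : \sum_(i < N.+3) i * h i = N.
    have LN2 : L.-2 <= N.+2 by lia.
    have := @move_sum N.+2 f L L.-2 LN LN2 fL.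
    rewrite sm -/h => H; apply/eqP; rewrite -(eqn_add2r L) H; apply/eqP; lia.
  have hnr : forall i, ~~ odd i -> h i <= 1.
    move=> i oi; apply: leq_trans (nr i oi); apply: move_le.
    by apply: neq_odd; rewrite oL2 (negbTE oi).
  have [sN bN bh] := mk_base hs h0 hsum hnr.
  have [kh Xh] : kof N h = L.-2 /\ (odd (lp N h) || (0 < h (lp N h).-1)).
    case: (posnP (f L.-1)) => fL1'.
    + have lph : lp N h = L.-2.
        apply: lp_eq => //; first by rewrite /h move_b; solve_side.
        move=> j Lj; case: (eqVneq j L) => [->|jL].
          by rewrite /h move_a; solve_side.
        case: (eqVneq j L.-1) => [->|jL1].
          by rewrite /h move_o //; neqlia.
        rewrite /h move_o // ?hL //; solve_side.
      by rewrite /kof lph oL2.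
    + have lph : lp N h = L.-1.
        apply: lp_eq => //; first by rewrite /h move_o //; neqlia.
        move=> j Lj; case: (eqVneq j L) => [->|jL].
          by rewrite /h move_a; solve_side.
        rewrite /h move_o // ?hL //; solve_side.
      have oL1 : odd L.-1 = false by rewrite odd_pred // od.
      rewrite /kof lph oL1 /=; split; first by lia.
      by rewrite /h move_b; solve_side.
  split=> //; first by rewrite /Xp bh Xh.
  by rewrite /Gb kh -eL move_inv //; neqlia.
- move=> g s _ /andP[bs xg].
  have [g0 sm nr] := (base_iff s).1 bs.
  have [i0 fi0] := part_ne sm N0.
  have [gL hL] := lp_spec s fi0.
  have LN := lp_le N g.
  have L0 : 0 < lp N g by case: (posnP (lp N g)) => // e; rewrite e g0 in gL.
  have [oK gK KL LK] : [/\ odd (kof N g), 0 < g (kof N g), kof N g <= lp N g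
                        & lp N g <= (kof N g).+1].
    rewrite /kof; case: ifP => oL; first by split.
    rewrite oL /= in xg; split=> //; [by rewrite odd_pred // oL | lia | lia].
  rewrite /Gb; set K := kof N g in oK gK KL LK *; set L := lp N g in LN L0 gL hL KL LK.
  have K0 : 0 < K by case: (posnP K) => // e; rewrite e in oK.
  set h := move K K.+2 g.
  have s2 : supp_le N.+2 g by move=> i Ni; apply: s; lia.
  have hs : supp_le N.+2 h by apply: move_supp => //; lia.
  have h0 : h 0 = 0 by rewrite /h move_o ?g0 //; neqlia.
  have hsum : \sum_(i < N.+3) i * h i = N.+2.
    have KN : K <= N.+2 by lia.
    have KN2 : K.+2 <= N.+2 by lia.
    have := @move_sum N.+2 g K K.+2 KN KN2 gK.
    rewrite (sum_widen s (leq_trans (leqnSn N) (leqnSn N.+1))) -/h sm => H.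
    apply/eqP; rewrite -(eqn_add2r K) H; apply/eqP; lia.
  have hnr : forall i, ~~ odd i -> h i <= 1.
    move=> i oi; rewrite /h move_o; first exact: nr.
      by apply: neq_odd; rewrite oK (negbTE oi).
    by apply: neq_odd; rewrite /= negbK oK (negbTE oi).
  have [sN bN bh] := mk_base hs h0 hsum hnr.
  have gK2 : g K.+2 = 0 by apply: hL; lia.
  have lph : lp N.+2 h = K.+2.
    apply: lp_eq => //; first by rewrite /h move_b; solve_side.
    move=> j Lj; rewrite /h move_o // ?hL //; solve_side.
  split=> //.
    rewrite /D3 bh lph /= negbK oK /=; rewrite /h move_b ?gK2 //; neqlia.
  by rewrite /Fb lph /= move_inv //; neqlia.
Qed.

Definition Yp N f := base N f && ~~ (odd (lp N f) || (0 < f (lp N f).-1)).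
Definition Fc N f := move (lp N f) (lp N f).+1 f.
Definition Gc N g := move (lp N g) (lp N g).-1 g.

Lemma card_c N : 0 < N ->
  #|[set m : mult_part N | D3 N (conv m)]|
  = #|[set m : mult_part N.+1 | Yp N.+1 (conv m)]|.
Proof.
move=> N0; apply: (@transport N N.+1 (D3 N) (Yp N.+1) (Fc N) (Gc N.+1)).
- move=> g s _ /andP[bs /andP[od /eqP gL1]].
  have [g0 sm nr] := (base_iff s).1 bs.
  have [i0 fi0] := part_ne sm N0.
  have [gL hL] := lp_spec s fi0.
  have LN := lp_le N g.
  rewrite /Fc; set L := lp N g in gL hL od LN gL1 *.
  have L0 : 0 < L by case: (posnP L) => // e; rewrite e g0 in gL.
  set h := move L L.+1 g.
  have s1 : supp_le N.+1 g by move=> i Ni; apply: s; lia.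
  have hs : supp_le N.+1 h by apply: move_supp.
  have h0 : h 0 = 0 by rewrite /h move_o ?g0 //; neqlia.
  have hsum : \sum_(i < N.+2) i * h i = N.+1.
    have := @move_sum N.+1 g L L.+1 (leqW LN) LN gL.
    rewrite (sum_widen s (leqnSn N)) sm => H; apply/eqP; rewrite -(eqn_add2r L) H addnS -addSn //.
  have hnr : forall i, ~~ odd i -> h i <= 1.
    move=> i oi; case: (eqVneq i L.+1) => [->|iL].
      by rewrite /h move_b ?hL //; neqlia.
    apply: leq_trans (nr i oi); apply: move_le => //.
  have [sN bN bh] := mk_base hs h0 hsum hnr.
  have lph : lp N.+1 h = L.+1.
    apply: lp_eq => //; first by rewrite /h move_b; solve_side.
    move=> j Lj; rewrite /h move_o // ?hL //; solve_side.
  split=> //.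
    rewrite /Yp bh lph /= od /= -leqNgt leqn0.
    by rewrite /h move_a ?gL1 //; neqlia.
  by rewrite /Gc lph /= move_inv //; neqlia.
- move=> f s _ /andP[bs yf].
  have [f0 sm nr] := (base_iff s).1 bs.
  have [i0 fi0] := part_ne sm (ltn0Sn N).
  have [fL hL] := lp_spec s fi0.
  have LN := lp_le N.+1 f.
  rewrite negb_or -ltnNge ltnS leqn0 in yf; case/andP: yf => ev /eqP fLm1.
  rewrite /Gc; set L := lp N.+1 f in fL hL ev LN fLm1 *.
  have L0 : 0 < L by case: (posnP L) => // e; rewrite e f0 in fL.
  have L1 : L != 1 by apply: contraNneq ev => ->.
  have fL1 : f L = 1 by have := nr L ev; lia.
  have oL : odd L.-1 by rewrite odd_pred.
  set h := move L L.-1 f.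
  have hs : supp_le N.+1 h by apply: move_supp => //; lia.
  have h0 : h 0 = 0 by rewrite /h move_o ?f0 //; neqlia.
  have hsum : \sum_(i < N.+2) i * h i = N.
    have := @move_sum N.+1 f L L.-1 LN (leq_trans (leq_pred L) LN) fL.
    rewrite sm -/h; lia.
  have hnr : forall i, ~~ odd i -> h i <= 1.
    move=> i oi; apply: leq_trans (nr i oi); apply: move_le.
    by apply: neq_odd; rewrite oL (negbTE oi).
  have [sN bN bh] := mk_base hs h0 hsum hnr.
  have lph : lp N h = L.-1.
    apply: lp_eq => //; first by rewrite /h move_b; solve_side.
    move=> j Lj; case: (eqVneq j L) => [->|jL].
      by rewrite /h move_a; solve_side.
    rewrite /h move_o // ?hL //; solve_side.
  split=> //.
    rewrite /D3 bh lph oL /= /h move_b ?fLm1 //; neqlia.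
  by rewrite /Fc lph prednK // move_inv //; neqlia.
Qed.

Theorem corollary4 (n : nat) (hn : 1 < n) :
  DE3 (n + 2) + DE3 (n - 1) = DE1 n + DE1 (n - 1).
Proof.
case: n hn => [|N] // hN.
have N0 : 0 < N by [].
rewrite subn1 /= addn2 (DE3E (isT : 0 < N.+3)) (DE3E N0) (DE1E (isT : 0 < N.+1)) (DE1E N0).
rewrite (card_b (isT : 0 < N.+1)) (card_c N0) -(card_a N0).
have e1 := split_card (fun m : mult_part N.+1 => base N.+1 (conv m))
                      (fun m => odd (lp N.+1 (conv m)) || (0 < conv m (lp N.+1 (conv m)).-1)).
have e2 := split_card (fun m : mult_part N.+1 => base N.+1 (conv m))
                      (fun m => odd (lp N.+1 (conv m))).
exact: (etrans e1 (esym e2)).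
Qed.
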